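(* Let $G$ be an undirected graph with double cover $H$, let $\alpha\in(0,1]$, $s\in\mathbb{R}^{2n}_{\ge0}$ and a nonnegative residual $r\in\mathbb{R}^{2n}_{\ge0}$, and let $\mathrm{apr}(\alpha,s,r)$ be the approximate PageRank vector defined with respect to $H$. Then $p=\sigma\circ\mathrm{apr}(\alpha,s,r)$ satisfies, for every $u\in V_G$, \[p(u_1)\le\alpha\big(s(u_1)+r(u_2)\big)+(1-\alpha)(pW)(u_1),\qquad p(u_2)\le\alpha\big(s(u_2)+r(u_1)\big)+(1-\alpha)(pW)(u_2).\]
   Context: $G$ has $n$ vertices. The double cover $H$ has vertices $v_1,v_2$ per $v\in V_G$ and edges $\{u_1,v_2\},\{u_2,v_1\}$ per $\{u,v\}\in E_G$. $W=\frac12(I+D_H^{-1}A_H)$ is the lazy random walk matrix of $H$ (row vectors act by $p\mapsto pW$). $\mathrm{pr}(\alpha,s)$ is the unique solution of $\mathrm{pr}=\alpha s+(1-\alpha)\mathrm{pr}\,W$; $\mathrm{apr}(\alpha,s,r)$ is the vector $q$ with $q+\mathrm{pr}(\alpha,r)=\mathrm{pr}(\alpha,s)$. The simplify operator is given by $(\sigma\circ p)(u_1)=\max(0,p(u_1)-p(u_2))$, $(\sigma\circ p)(u_2)=\max(0,p(u_2)-p(u_1))$ for $p\in\mathbb{R}^{2n}$. *)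

(* Defs.v *)
From HB Require Import structures.
From mathcomp Require Import all_boot all_order all_algebra.
Set Implicit Arguments. Unset Strict Implicit. Unset Printing Implicit Defensive.
Import Order.TTheory GRing.Theory Num.Theory.
Local Open Scope ring_scope.

(* The double cover H has vertex type V * bool: (v, false) is v_1 and
   (v, true) is v_2. {x, y} is an edge of H iff {x.1, y.1} is an edge of G
   and x, y lie in different copies. *)
Definition adjH (V : finType) (e : rel V) (x y : V * bool) : bool :=
  e x.1 y.1 && (x.2 != y.2).

Definition degH (V : finType) (e : rel V) (x : V * bool) : nat :=
  #|[set y | adjH e x y]|.

Definition walkW (R : fieldType) (V : finType) (e : rel V) (x y : V * bool) : R :=
  2^-1 * (((x == y)%:R : R) + ((adjH e x y)%:R : R) / ((degH e x)%:R : R)).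

Definition mulW (R : fieldType) (V : finType) (e : rel V)
  (p : V * bool -> R) (y : V * bool) : R :=
  \sum_(x : V * bool) p x * walkW R e x y.

Definition is_pr (R : fieldType) (V : finType) (e : rel V) (alpha : R)
  (s x : V * bool -> R) : Prop :=
  forall v, x v = alpha * s v + (1 - alpha) * mulW e x v.

Definition is_apr (R : fieldType) (V : finType) (e : rel V) (alpha : R)
  (s r q : V * bool -> R) : Prop :=
  exists prs prr, is_pr e alpha s prs /\ is_pr e alpha r prr /\
    forall v, q v + prr v = prs v.

Definition simplify (R : realDomainType) (V : finType) (p : V * bool -> R)
  (x : V * bool) : R :=
  Num.max 0 (p x - p (x.1, ~~ x.2)).

(* Main.v *)
Require Import Defs.
From HB Require Import structures.
From mathcomp Require Import all_boot all_order all_algebra.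
From mathcomp Require Import ring lra.
Import Order.TTheory GRing.Theory Num.Theory.
Local Open Scope ring_scope.

Definition sw (V : finType) (x : V * bool) : V * bool := (x.1, ~~ x.2).
Arguments sw {V}.

Lemma swK (V : finType) : involutive (@sw V).
Proof. by case=> a b; rewrite /sw /= negbK. Qed.

Lemma sw_inj (V : finType) : injective (@sw V).
Proof. exact: inv_inj (@swK V). Qed.

Lemma adjH_sw (V : finType) (e : rel V) x y :
  adjH e (sw x) y = adjH e x (sw y).
Proof. by case: x y => a b [c d]; rewrite /adjH /sw /=; case: b; case: d. Qed.

Lemma degH_sw (V : finType) (e : rel V) x : degH e (sw x) = degH e x.
Proof.
rewrite /degH -(card_imset [set y | adjH e x y] (@sw_inj V)).
rewrite (can2_imset_pre _ (@swK V) (@swK V)); apply: eq_card => y.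
by rewrite !inE adjH_sw.
Qed.

Lemma walkW_sw (R : fieldType) (V : finType) (e : rel V) x y :
  walkW R e (sw x) (sw y) = walkW R e x y.
Proof.
rewrite /walkW degH_sw adjH_sw swK (inj_eq (@sw_inj V)) //.
Qed.

Lemma mulW_sw (R : fieldType) (V : finType) (e : rel V) (f : V * bool -> R) x :
  mulW e (fun y => f (sw y)) x = mulW e f (sw x).
Proof.
rewrite /mulW (reindex_inj (@sw_inj V)) /=; apply: eq_bigr => y _.
by rewrite -walkW_sw swK.
Qed.

Lemma mulWB (R : fieldType) (V : finType) (e : rel V) (f g : V * bool -> R) x :
  mulW e (fun y => f y - g y) x = mulW e f x - mulW e g x.
Proof. by rewrite /mulW -sumrB; apply: eq_bigr => y _; rewrite mulrBl. Qed.

Lemma walkW_ge0 (R : realFieldType) (V : finType) (e : rel V) x y :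
  0 <= walkW R e x y.
Proof.
rewrite /walkW mulr_ge0 ?invr_ge0 ?ler0n // addr_ge0 ?ler0n //.
by rewrite divr_ge0 ?ler0n.
Qed.

Theorem lemma5 (R : realFieldType) (V : finType) (e : rel V)
  (e_sym : symmetric e) (alpha : R) (s r q : V * bool -> R) :
  0 < alpha -> alpha <= 1 ->
  (forall x, 0 <= s x) -> (forall x, 0 <= r x) ->
  is_apr e alpha s r q ->
  let p := simplify q in
  forall u : V,
    p (u, false) <= alpha * (s (u, false) + r (u, true))
                    + (1 - alpha) * mulW e p (u, false) /\
    p (u, true) <= alpha * (s (u, true) + r (u, false))
                    + (1 - alpha) * mulW e p (u, true).
Proof.
move=> a0 a1 s0 r0 [prs [prr [Hs [Hr Hq]]]] p.
have qE : forall v, q v = alpha * (s v - r v) + (1 - alpha) * mulW e q v.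
  move=> v; have qw : forall w, q w = prs w - prr w by move=> w; rewrite -Hq addrK.
  have -> : mulW e q v = mulW e (fun w => prs w - prr w) v.
    by apply: eq_bigr => w _; rewrite qw.
  by rewrite mulWB qw Hs Hr; ring.
pose d := fun v => q v - q (sw v).
have dE : forall v, d v = alpha * (s v - r v - (s (sw v) - r (sw v)))
                 + (1 - alpha) * mulW e d v.
  move=> v; rewrite /d mulWB mulW_sw (qE v) (qE (sw v)); ring.
have pge0 : forall v, 0 <= p v by move=> v; rewrite /p /simplify le_max lexx.
have dp : forall v, d v <= p v by move=> v; rewrite /p /simplify le_max lexx orbT.
have a1' : 0 <= 1 - alpha by rewrite subr_ge0.
have key : forall v, p v <= alpha * (s v + r (sw v)) + (1 - alpha) * mulW e p v.
  move=> v.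
  have Wp : 0 <= mulW e p v.
    by rewrite /mulW sumr_ge0 // => y _; rewrite mulr_ge0 ?walkW_ge0.
  have Wd : mulW e d v <= mulW e p v.
    by rewrite /mulW ler_sum // => y _; rewrite ler_wpM2r ?walkW_ge0.
  have := dE v; have := s0 (sw v); have := r0 v; have := s0 v; have := r0 (sw v).
  rewrite /p /simplify -/(d v) /= => h1 h2 h3 h4 h5.
  have h6 := ler_wpM2l a1' Wd.
  have h7 : 0 <= (1 - alpha) * mulW e p v by rewrite mulr_ge0.
  have h8 : 0 <= alpha * (s v + r (sw v)) by rewrite mulr_ge0 ?addr_ge0 // ltW.
  rewrite ge_max; apply/andP; split; first by rewrite addr_ge0.
  rewrite h5.
  have h9 : alpha * (s v - r v - (s (sw v) - r (sw v))) <= alpha * (s v + r (sw v)).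
    by rewrite ler_pM2l //; lra.
  by apply: (le_trans (lerD h9 h6)).
by move=> u; split; apply: key.
Qed.
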